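(* Under the setup described in the context (a connected graph $G$ with $\mathrm{col}(G)=d\geq 3$, $M=K_1\vee G$ with apex $w$, and an $m$-fold cover $\mathcal{H}=(L,H)$ of $M$ with $m\geq d+3$ in which $E_H(L(u),L(v))$ is a perfect matching for every $uv\in E(M)$): if $L(w)$ contains at least $m-1$ level vertices, then there is a natural bijection between the $\mathcal{H}$-colorings of $M$ and the proper $m$-colorings of $M$; consequently $P_{DP}(M,\mathcal{H})=P(M,m)$.
   Context: All graphs are finite and simple. $\mathrm{col}(G)$ is the smallest $d$ such that some ordering of $V(G)$ has each vertex with at most $d-1$ earlier neighbors. $M=K_1\vee G$ is the join of $G$ with a single new vertex $w$. $P(M,m)$ is the chromatic polynomial. A cover of a graph $G$ is a pair $\mathcal{H}=(L,H)$ where $H$ is a graph and $L:V(G)\to\mathcal{P}(V(H))$ satisfies: (1) the sets $L(u)$ partition $V(H)$; (2) each $H[L(u)]$ is complete; (3) if $E_H(L(u),L(v))\neq\emptyset$ then $u=v$ or $uv\in E(G)$; (4) if $uv\in E(G)$ then $E_H(L(u),L(v))$ is a matching. $E_H(S,U)$ is the set of edges of $H$ between $S$ and $U$; the cover is $m$-fold if all $|L(u)|=m$; an $\mathcal{H}$-coloring is an independent set of $H$ of size $|V(G)|$, and $P_{DP}(G,\mathcal{H})$ counts them. Natural bijection: for an $m$-fold cover $\mathcal{H}$ of a graph $G$, the elements of each $L(v)$ can be labeled $\{(v,j):j\in[m]\}$ so that $(u,j)(v,j)\in E(H)$ for all $uv\in E(G)$ and $j\in[m]$. Setup: write $L(w)=\{(w,j):j\in[m]\}$;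 for $j\in[m]$ and $v\in V(G)$ let $H^{(j)}=H-N_H[(w,j)]$ and $L^{(j)}(v)=L(v)\setminus N_H((w,j))$, so $\mathcal{H}^{(j)}=(L^{(j)},H^{(j)})$ is an $(m-1)$-fold cover of $G$. Cross-edges of $H^{(j)}$ are its edges joining $L^{(j)}(x)$ and $L^{(j)}(y)$ for distinct $x,y\in V(G)$. The vertex $(w,t)$ is a level vertex if $H^{(t)}$ has exactly $|E(G)|(m-1)$ cross-edges. *)

(* Defs.v *)
From mathcomp Require Import all_boot.
Set Implicit Arguments. Unset Strict Implicit. Unset Printing Implicit Defensive.

Definition simple_graph (T : finType) (e : rel T) : Prop :=
  symmetric e /\ irreflexive e.

Definition connected_graph (T : finType) (e : rel T) : Prop :=
  (0 < #|T|) /\ forall x y : T, connect e x y.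

Definition num_edges (T : finType) (e : rel T) : nat :=
  #|[set p : T * T | e p.1 p.2]| %/ 2.

Definition ordering_ok (T : finType) (e : rel T) (d : nat) (s : seq T) : bool :=
  perm_eq s (enum T) &&
  all (fun x => count (e x) (take (index x s) s) <= d.-1) s.

Definition col_le (T : finType) (e : rel T) (d : nat) : Prop :=
  exists s : seq T, ordering_ok e d s.

Definition coloring_number (T : finType) (e : rel T) (d : nat) : Prop :=
  col_le e d /\ forall d', col_le e d' -> d <= d'.

(* The join M = K_1 \/ G; the apex w is [None]. *)
Definition join_apex (T : finType) (e : rel T) : rel (option T) :=
  fun x y => match x, y with
             | Some a, Some b => e a b
             | None, Some _ | Some _, None => true
             | None, None => false
             end.

Definition is_cover (T HV : finType) (e : rel T) (h : rel HV)
    (L : T -> {set HV}) : Prop :=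
  simple_graph h /\
  (forall x : HV, exists u, x \in L u) /\
  (forall u v x, x \in L u -> x \in L v -> u = v) /\
  (forall u x y, x \in L u -> y \in L u -> x != y -> h x y) /\
  (forall u v x y, x \in L u -> y \in L v -> h x y -> u = v \/ e u v) /\
  (forall u v x y z, e u v -> x \in L u -> y \in L v -> z \in L v ->
      h x y -> h x z -> y = z).

Definition m_fold (T HV : finType) (L : T -> {set HV}) (m : nat) : Prop :=
  forall u, #|L u| = m.

Definition perfect_matchings (T HV : finType) (e : rel T) (h : rel HV)
    (L : T -> {set HV}) : Prop :=
  forall u v x, e u v -> x \in L u -> exists2 y, y \in L v & h x y.

Definition independent (HV : finType) (h : rel HV) (I : {set HV}) : bool :=
  [forall x in I, forall y in I, ~~ h x y].

Definition DP_coloring (T HV : finType) (h : rel HV) (I : {set HV}) : bool :=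
  independent h I && (#|I| == #|T|).

Definition P_DP (T HV : finType) (h : rel HV) : nat :=
  #|[set I : {set HV} | DP_coloring T h I]|.

Definition proper_coloring (T : finType) (e : rel T) (m : nat)
    (c : {ffun T -> 'I_m}) : bool :=
  [forall u, forall v, e u v ==> (c u != c v)].

Definition chrom_count (T : finType) (e : rel T) (m : nat) : nat :=
  #|[set c : {ffun T -> 'I_m} | proper_coloring e c]|.

(* Ordered cross pairs of H^(t) = H - N_H[t], with L^(t)(v) = L(v) \ N_H(t),
   for a cover of K_1 \/ G, t in L(w). *)
Definition cross_edges_after (V HV : finType) (h : rel HV)
    (L : option V -> {set HV}) (t : HV) : nat :=
  #|[set p : HV * HV |
      [&& p.1 != t, ~~ h t p.1, p.2 != t, ~~ h t p.2, h p.1 p.2 &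
       [exists a : V, exists b : V,
          [&& a != b, p.1 \in L (Some a) & p.2 \in L (Some b)]]]]| %/ 2.

Definition level_vertex (V HV : finType) (e : rel V) (h : rel HV)
    (L : option V -> {set HV}) (m : nat) (t : HV) : bool :=
  cross_edges_after h L t == num_edges e * m.-1.

(* Main.v *)
Require Import Defs.
From mathcomp Require Import all_boot.
From mathcomp Require Import zify.
Set Implicit Arguments. Unset Strict Implicit. Unset Printing Implicit Defensive.
Lemma even_sym (T : finType) (r : rel T) : symmetric r -> irreflexive r ->
  #|[set p : T * T | r p.1 p.2]| = 2 * #|[set p : T * T | r p.1 p.2 & enum_rank p.1 < enum_rank p.2]|.
Proof.
move=> rs ri.
set S := [set p : T * T | r p.1 p.2].
set A := [set p : T * T | enum_rank p.1 < enum_rank p.2].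
have -> : [set p : T * T | r p.1 p.2 & enum_rank p.1 < enum_rank p.2] = S :&: A.
  by apply/setP=> p; rewrite !inE.
rewrite -(cardsID A S).
have -> : S :\: A = (fun p : T * T => (p.2, p.1)) @^-1: (S :&: A).
  apply/setP=> [[x y]]; rewrite !inE /= rs.
  case rxy: (r y x); last by rewrite andbF.
  have nxy : x != y by apply/eqP=> E; rewrite E ri in rxy.
  have : enum_rank x != enum_rank y by apply: contra nxy => /eqP/enum_rank_inj ->.
  move: (enum_rank x) (enum_rank y) => i j nij.
  have : nat_of_ord i != nat_of_ord j by [].
  rewrite andbT; move: nij; rewrite -(inj_eq val_inj) /=; lia.
have -> := @card_preimset _ (fun p : T*T => (p.2,p.1)) (S :&: A); first lia.
by move=> [x y] [x' y'] [-> ->].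
Qed.

Section Main.
Variables (V HV : finType) (e : rel V) (h : rel HV) (L : option V -> {set HV}) (m : nat).
Hypothesis He : simple_graph e.
Hypothesis Hcov : is_cover (join_apex e) h L.
Hypothesis Hm : m_fold L m.
Hypothesis Hpm : perfect_matchings (join_apex e) h L.
Hypothesis m2 : 2 <= m.

Local Notation J := (join_apex e).

Lemma Jsym : symmetric J.
Proof. case: He => es _; by move=> [a|] [b|] //=; rewrite es. Qed.
Lemma Jirr : irreflexive J.
Proof. case: He => _ ei; by move=> [a|] //=; rewrite ei. Qed.
Lemma hsym : symmetric h.
Proof. by case: Hcov => [[]]. Qed.
Lemma hirr : irreflexive h.
Proof. by case: Hcov => [[]]. Qed.
Lemma Lcov x : exists u, x \in L u.
Proof. by case: Hcov => _ [H1 _]; apply: H1. Qed.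
Lemma Ldisj u v x : x \in L u -> x \in L v -> u = v.
Proof. by case: Hcov => _ [_ [H1 _]]; apply: H1. Qed.
Lemma Lcomp u x y : x \in L u -> y \in L u -> x != y -> h x y.
Proof. by case: Hcov => _ [_ [_ [H1 _]]]; apply: H1. Qed.
Lemma Ladj u v x y : x \in L u -> y \in L v -> h x y -> u = v \/ J u v.
Proof. by case: Hcov => _ [_ [_ [_ [H1 _]]]]; apply: H1. Qed.
Lemma Lmatch u v x y z : J u v -> x \in L u -> y \in L v -> z \in L v ->
      h x y -> h x z -> y = z.
Proof. by case: Hcov => _ [_ [_ [_ [_ H1]]]]; apply: H1. Qed.

Definition phi (x : HV) (u : option V) : HV :=
  if u is Some v then odflt x [pick y in L u | h x y] else x.

Lemma phiP x v : x \in L None -> phi x (Some v) \in L (Some v) /\ h x (phi x (Some v)).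
Proof.
move=> xL; rewrite /phi; case: pickP => [y /andP[-> ->] //|/= H].
have [y yL hy] := Hpm (u:=None) (v:=Some v) (x:=x) erefl xL.
by have := H y; rewrite yL hy.
Qed.

Lemma phiL x u : x \in L None -> phi x u \in L u.
Proof. by case: u => [v|] xL; [case: (phiP v xL)|]. Qed.

Lemma phih x v : x \in L None -> h x (phi x (Some v)).
Proof. by move=> xL; case: (phiP v xL). Qed.

Lemma phi_uniq x v y : x \in L None -> y \in L (Some v) -> h x y -> phi x (Some v) = y.
Proof.
move=> xL yL hy; case: (phiP v xL) => pL ph.
exact: (Lmatch (u:=None) (v:=Some v) erefl xL pL yL ph hy).
Qed.

Lemma phi_inj x1 x2 u : x1 \in L None -> x2 \in L None -> phi x1 u = phi x2 u -> x1 = x2.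
Proof.
case: u => [v|//] x1L x2L E.
have [pL ph1] := phiP v x1L; have [_ ph2] := phiP v x2L.
rewrite E in pL ph1.
apply: (Lmatch (u:=Some v) (v:=None) erefl pL x1L x2L); by rewrite hsym.
Qed.


Definition lst (x : HV) : option V := odflt None [pick u | x \in L u].
Lemma lstP x : x \in L (lst x).
Proof.
rewrite /lst; case: pickP => [u //|/= H].
by have [u xu] := Lcov x; have := H u; rewrite xu.
Qed.
Lemma lstE x u : x \in L u -> lst x = u.
Proof. by move=> xu; apply: (Ldisj (lstP x) xu). Qed.

Lemma inj_le (X Y : finType) (D : {set X}) (B : {set Y}) (g : X -> Y) :
  {in D &, injective g} -> (forall x, x \in D -> g x \in B) -> #|D| <= #|B|.
Proof.
move=> gi gB; rewrite -(card_in_imset gi); apply: subset_leq_card.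
by apply/subsetP=> y /imsetP[x xD ->]; apply: gB.
Qed.

Section Level.
Variables (t : HV) (a b : V).
Hypothesis tL : t \in L None.
Hypothesis eab : e a b.
Hypothesis nb : ~~ h (phi t (Some a)) (phi t (Some b)).

Let P := [set p : HV * HV |
      [&& p.1 != t, ~~ h t p.1, p.2 != t, ~~ h t p.2, h p.1 p.2 &
       [exists a : V, exists b : V,
          [&& a != b, p.1 \in L (Some a) & p.2 \in L (Some b)]]]].
Let E := [set p : V * V | e p.1 p.2].
Let vof x : V := if lst x is Some v then v else a.
Let f (p : HV * HV) := (vof p.1, vof p.2).

Lemma Pmem p : p \in P -> [/\ p.1 \in L (Some (f p).1), p.2 \in L (Some (f p).2),
   e (f p).1 (f p).2 & [/\ ~~ h t p.1, ~~ h t p.2 & h p.1 p.2]].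
Proof.
rewrite inE => /and5P[_ n1 _ n2 /andP[hp /existsP[a' /existsP[b' /and3P[nab p1 p2]]]]].
rewrite /f /vof (lstE p1) (lstE p2) /=; split => //.
by case: (Ladj p1 p2 hp) => // -[E']; rewrite E' eqxx in nab.
Qed.

Let F q := #|[set p in P | f p == q]|.

Lemma Fb1 q : F q <= m.-1.
Proof.
have phL := phiL (Some q.1) tL.
have -> : m.-1 = #|L (Some q.1) :\ phi t (Some q.1)|.
  by move: (cardsD1 (phi t (Some q.1)) (L (Some q.1))); rewrite phL Hm add1n => ->.
apply: (inj_le (g:=fst)).
  move=> p p' /setIdP[pP /eqP fp] /setIdP[pP' /eqP fp'] e1.
  have [p1 p2 eq _] := Pmem pP; have [p1' p2' _ _] := Pmem pP'.
  rewrite fp in p1 p2 eq; rewrite fp' in p1' p2'.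
  case: (Pmem pP) => _ _ _ [_ _ h1]; case: (Pmem pP') => _ _ _ [_ _ h1'].
  move: p p' e1 p1 p2 p1' p2' h1 h1' {pP pP' fp fp'} => [x y] [x' y'] /= <- p1 p2 p1' p2' h1 h1'.
  by rewrite (Lmatch (u:=Some q.1) (v:=Some q.2) eq p1 p2 p2' h1 h1').
move=> p /setIdP[pP /eqP fp].
have [p1 _ _ [n1 _ _]] := Pmem pP; rewrite fp in p1; rewrite !inE p1 andbT.
by apply: contra n1 => /eqP ->; apply: phih.
Qed.

Lemma Fb2 : F (a, b) <= m.-2.
Proof.
have phLa := phiL (Some a) tL; have phLb := phiL (Some b) tL.
have eba : J (Some b) (Some a) by rewrite Jsym.
have [z zL hz] := Hpm (u:=Some b) (v:=Some a) (x:=phi t (Some b)) eba phLb.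
have nz : phi t (Some a) != z.
  by apply: contraNneq nb => ->; rewrite hsym.
have -> : m.-2 = #|L (Some a) :\: [set phi t (Some a); z]|.
  rewrite cardsD (setIidPr _); last by apply/subsetP=> y; rewrite !inE => /orP[]/eqP->.
  by rewrite cards2 nz Hm subn2.
apply: (inj_le (g:=fst)).
  move=> p p' /setIdP[pP /eqP fp] /setIdP[pP' /eqP fp'] e1.
  have [p1 p2 eq _] := Pmem pP; have [p1' p2' _ _] := Pmem pP'.
  rewrite fp in p1 p2 eq; rewrite fp' in p1' p2'.
  case: (Pmem pP) => _ _ _ [_ _ h1]; case: (Pmem pP') => _ _ _ [_ _ h1'].
  move: p p' e1 p1 p2 p1' p2' h1 h1' {pP pP' fp fp'} => [x y] [x' y'] /= <- p1 p2 p1' p2' h1 h1'.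
  by rewrite (Lmatch (u:=Some a) (v:=Some b) eq p1 p2 p2' h1 h1').
move=> p /setIdP[pP /eqP fp].
have [p1 p2 _ [n1 n2 h12]] := Pmem pP; rewrite fp /= in p1 p2; rewrite !inE p1 andbT negb_or.
apply/andP; split; first by apply: contra n1 => /eqP ->; apply: phih.
apply/eqP=> E1; rewrite E1 in h12.
have hz' : h z (phi t (Some b)) by rewrite hsym.
have := Lmatch (u:=Some a) (v:=Some b) eab zL p2 phLb h12 hz'.
by move=> E2; move: n2; rewrite E2 phih.
Qed.

Lemma sumP : #|P| = \sum_(q in E) F q.
Proof.
rewrite -sum1_card (partition_big f (fun q => q \in E)).
  apply: eq_bigr => q _; rewrite /F.
  transitivity (\sum_(i in [set p in P | f p == q]) 1);
    [by apply: eq_bigl => p; rewrite !inE | by rewrite sum1_card].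
by move=> p pP; have [_ _ eq _] := Pmem pP; rewrite inE.
Qed.

Lemma not_level : ~~ level_vertex e h L m t.
Proof.
have abE : (a, b) \in E by rewrite inE.
have : #|P| + 1 <= #|E| * m.-1.
  rewrite sumP (bigD1 (a, b)) //= -sum_nat_const [X in _ <= X](bigD1 (a, b)) //=.
  set s1 := bigop _ _ _; set s2 := bigop _ _ _.
  have H1 : s1 <= s2 by apply: leq_sum => q _; apply: Fb1.
  have := Fb2; move: H1 m2; lia.
have [es ei] := He.
have EE := even_sym es ei.
rewrite /level_vertex /cross_edges_after /num_edges -/P -/E.
move: EE; rewrite -/E => ->.
have : 0 < #|E| by apply/card_gt0P; exists (a, b).
move: #|P| => np; rewrite mulKn //.
move: #|[set p : V * V | e p.1 p.2 & enum_rank p.1 < enum_rank p.2]| => k.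
move: m.-1 => n; rewrite mulnAC => H1 H2.
apply/negP => /eqP H3.
have : 2 * (np %/ 2) <= np by rewrite mulnC leq_divM.
nia.
Qed.

End Level.

Lemma level_good t a b : t \in L None -> level_vertex e h L m t -> e a b ->
  h (phi t (Some a)) (phi t (Some b)).
Proof.
move=> tL lv eab; apply/idPn => nb.
by have := not_level tL eab nb; rewrite lv.
Qed.

Lemma keyD x a b : x \in L None ->
  m.-1 <= #|[set t in L None | level_vertex e h L m t]| -> e a b ->
  h (phi x (Some a)) (phi x (Some b)).
Proof.
set S := [set t in L None | _] => xL cS eab.
case lx: (level_vertex e h L m x); first by apply: level_good.
have SE : S = L None :\ x.
  apply/eqP; rewrite eqEcard; apply/andP; split.
    apply/subsetP=> t; rewrite !inE => /andP[tL lt]; rewrite tL andbT.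
    by apply: contraTneq lt => ->; rewrite lx.
  by move: (cardsD1 x (L None)); rewrite xL Hm add1n => E1; rewrite E1 /= in cS.
have allS t : t \in L None -> t != x -> level_vertex e h L m t.
  move=> tL ntx; have : t \in S by rewrite SE !inE ntx tL.
  by rewrite inE => /andP[].
have yL := phiL (Some a) xL; have hxy := phih a xL.
have [z zL hyz] := Hpm (u:=Some a) (v:=Some b) (x:=phi x (Some a)) eab yL.
have ebn : J (Some b) None by [].
have [t' t'L hzt] := Hpm (u:=Some b) (v:=None) (x:=z) ebn zL.
have htz : h t' z by rewrite hsym.
case: (eqVneq t' x) => [Et|nt].
  by rewrite Et in htz; rewrite (phi_uniq xL zL htz).
have lt' := allS t' t'L nt.
have Ez := phi_uniq t'L zL htz.
have hg := level_good t'L lt' eab; rewrite Ez in hg.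
have eba : J (Some b) (Some a) by rewrite Jsym.
have h1 : h z (phi x (Some a)) by rewrite hsym.
have h2 : h z (phi t' (Some a)) by rewrite hsym.
have E2 := Lmatch (u:=Some b) (v:=Some a) eba zL yL (phiL (Some a) t'L) h1 h2.
by have := phi_inj xL t'L E2; move=> E3; rewrite E3 eqxx in nt.
Qed.

Hypothesis Hlev : m.-1 <= #|[set t in L None | level_vertex e h L m t]|.
Variable x0 : HV.

Definition tl (j : 'I_m) := nth x0 (enum (L None)) j.
Definition g (p : option V * 'I_m) := phi (tl p.2) p.1.

Lemma tl_mem j : tl j \in L None.
Proof. by rewrite /tl -mem_enum mem_nth // -cardE Hm. Qed.

Lemma tl_inj : injective tl.
Proof.
move=> i j; rewrite /tl => /eqP; rewrite nth_uniq ?enum_uniq // -?cardE ?Hm //.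
by move/eqP/val_inj.
Qed.

Lemma gL u j : g (u, j) \in L u.
Proof. exact: phiL (tl_mem j). Qed.

Lemma g_inj : injective g.
Proof.
move=> [u i] [v j] E.
have uv : u = v by apply: (Ldisj (gL u i)); rewrite E gL.
subst v; congr (_, _); apply: tl_inj.
exact: (phi_inj (tl_mem i) (tl_mem j) E).
Qed.

Lemma tl_surj x : x \in L None -> exists j, tl j = x.
Proof.
move=> xL.
have hi : index x (enum (L None)) < m by rewrite -(Hm None) cardE index_mem mem_enum.
by exists (Ordinal hi); rewrite /tl /= nth_index // mem_enum.
Qed.

Lemma g_surj y : exists p, g p = y.
Proof.
have [u yu] := Lcov y.
case: u yu => [v|] yu.
  have evn : J (Some v) None by [].
  have [t tL hyt] := Hpm (u:=Some v) (v:=None) (x:=y) evn yu.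
  have [j Ej] := tl_surj tL.
  exists (Some v, j); rewrite /g /= Ej; apply: phi_uniq => //; by rewrite hsym.
by have [j Ej] := tl_surj yu; exists (None, j).
Qed.

Lemma g_bij : bijective g.
Proof.
apply: inj_card_bij; first exact: g_inj.
rewrite -(card_codom g_inj); apply: subset_leq_card; apply/subsetP=> y _.
by have [p <-] := g_surj y; apply: codom_f.
Qed.

Lemma hg_J u v j : J u v -> h (g (u, j)) (g (v, j)).
Proof.
case: u v => [a|] [b|] //= eab; rewrite /g /=.
- exact: keyD (tl_mem j) Hlev eab.
- by rewrite hsym; apply: phih (tl_mem j).
- exact: phih (tl_mem j).
Qed.

Lemma hg_adj u v i j : J u v -> h (g (u, i)) (g (v, j)) = (i == j).
Proof.
move=> euv; case: (eqVneq i j) => [-> | nij]; first exact: hg_J.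
apply/negbTE/negP => hij.
have E := Lmatch euv (gL u i) (gL v i) (gL v j) (hg_J i euv) hij.
by have [] := g_inj E; move=> eij; rewrite eij eqxx in nij.
Qed.

Lemma hg_same u i j : h (g (u, i)) (g (u, j)) = (i != j).
Proof.
case: (eqVneq i j) => [-> | nij]; first by rewrite hirr.
apply: Lcomp (gL u i) (gL u j) _.
by apply: contra nij => /eqP /g_inj [->].
Qed.

Lemma hg_non u v i j : u != v -> ~~ J u v -> ~~ h (g (u, i)) (g (v, j)).
Proof.
move=> nuv nJ; apply/negP => hh.
by case: (Ladj (gL u i) (gL v j) hh) => [E|E]; [rewrite E eqxx in nuv | rewrite E in nJ].
Qed.


Definition Ic (c : {ffun option V -> 'I_m}) := [set g (u, c u) | u : option V].

Lemma Ic_card c : #|Ic c| = #|{: option V}|.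
Proof. by rewrite card_imset // => u1 u2 /g_inj []. Qed.

Lemma proper_DP c : proper_coloring J c <-> DP_coloring (option V) h (Ic c).
Proof.
rewrite /DP_coloring Ic_card eqxx andbT /independent /proper_coloring; split.
  move=> /forallP pc; apply/forall_inP => x /imsetP[u _ ->].
  apply/forall_inP => y /imsetP[v _ ->].
  case: (eqVneq u v) => [<-|nuv]; first by rewrite hg_same negbK.
  case euv: (J u v); last by apply: hg_non => //; rewrite euv.
  by rewrite hg_adj //; move: (pc u) => /forallP /(_ v); rewrite euv.
move=> /forall_inP ind; apply/forallP => u; apply/forallP => v; apply/implyP => euv.
have mI w : g (w, c w) \in Ic c by apply/imsetP; exists w.
by have := ind _ (mI u); move=> /forall_inP /(_ _ (mI v)); rewrite hg_adj.
Qed.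

Lemma DP_Ic I : DP_coloring (option V) h I -> exists c, I = Ic c.
Proof.
move=> /andP[/forall_inP ind /eqP cI].
have indP x y : x \in I -> y \in I -> ~~ h x y by move=> xI yI; move/forall_inP: (ind x xI); apply.
have lst_inj : {in I &, injective lst}.
  move=> x y xI yI E; apply/eqP/negPn/negP => nxy.
  have yL : y \in L (lst x) by rewrite E lstP.
  have := Lcomp (lstP x) yL nxy; by rewrite (negbTE (indP x y xI yI)).
have Hfull : lst @: I = setT.
  apply/eqP; rewrite eqEcard subsetT cardsT (card_in_imset lst_inj) cI; exact: leqnn.
have ex u : exists2 x, x \in I & x \in L u.
  have : u \in lst @: I by rewrite Hfull.
  by move=> /imsetP[x xI ->]; exists x => //; apply: lstP.
have [gi gK giK] := g_bij.
have gE y : g (lst y, (gi y).2) = y.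
  case E: (gi y) => [u j] /=; have := giK y; rewrite E => Ey.
  have -> : lst y = u by rewrite -Ey; apply: lstE; apply: gL.
  exact: Ey.
pose pk u := odflt x0 [pick x in I | x \in L u].
have pkP u : pk u \in I /\ pk u \in L u.
  rewrite /pk; case: pickP => [x /andP[-> ->] //| H].
  by have [x xI xu] := ex u; have := H x; rewrite xI xu.
exists [ffun u => (gi (pk u)).2]; apply/setP => x; apply/idP/idP.
  move=> xI; have [pI pL] := pkP (lst x).
  have Ex : pk (lst x) = x by apply: lst_inj => //; apply: lstE.
  apply/imsetP; exists (lst x) => //; by rewrite ffunE Ex gE.
move=> /imsetP[u _ ->]; rewrite ffunE.
have [pI pL] := pkP u; have Eu := lstE pL.
by rewrite -{1}Eu gE.
Qed.

Lemma Ic_inj : injective Ic.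
Proof.
move=> c1 c2 E; apply/ffunP => u.
have : g (u, c1 u) \in Ic c2 by rewrite -E; apply/imsetP; exists u.
by move=> /imsetP[v _ /g_inj [<- ->]].
Qed.

Lemma count_eq : P_DP (option V) h = chrom_count J m.
Proof.
rewrite /P_DP /chrom_count.
have -> : [set I : {set HV} | DP_coloring (option V) h I] =
          Ic @: [set c | proper_coloring J c].
  apply/setP => I; rewrite inE; apply/idP/imsetP.
    move=> dI; have [c Ec] := DP_Ic dI; exists c => //.
    by rewrite inE; apply/proper_DP; rewrite -Ec.
  by move=> [c]; rewrite inE => /proper_DP dc ->.
by rewrite card_imset //; apply: Ic_inj.
Qed.

End Main.

Theorem mainTheorem16 (V HV : finType) (e : rel V) (h : rel HV)
    (L : option V -> {set HV}) (d m : nat) :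
  simple_graph e -> connected_graph e ->
  coloring_number e d -> 3 <= d ->
  d + 3 <= m ->
  is_cover (join_apex e) h L -> m_fold L m ->
  perfect_matchings (join_apex e) h L ->
  m.-1 <= #|[set t in L None | level_vertex e h L m t]| ->
  (exists g : option V * 'I_m -> HV,
     [/\ bijective g,
         (forall u j, g (u, j) \in L u),
         (forall u v j, join_apex e u v -> h (g (u, j)) (g (v, j))),
         (forall c : {ffun option V -> 'I_m},
            proper_coloring (join_apex e) c <->
            DP_coloring (option V) h [set g (u, c u) | u : option V]) &
         (forall I : {set HV}, DP_coloring (option V) h I ->
            exists c : {ffun option V -> 'I_m},
              I = [set g (u, c u) | u : option V])])
  /\ P_DP (option V) h = chrom_count (join_apex e) m.
Proof.
move=> He _ _ d3 dm Hcov Hm Hpm Hlev.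
have m2 : 1 < m by lia.
have : 0 < #|L None| by rewrite Hm; lia.
move=> /card_gt0P [x0 _].
split; last exact: (count_eq He Hcov Hm Hpm m2 Hlev x0).
exists (g h L x0); split.
- exact: (g_bij Hcov Hm Hpm x0).
- exact: (gL Hm Hpm x0).
- move=> u v j; exact: (hg_J He Hcov Hm Hpm m2 Hlev x0).
- exact: (proper_DP He Hcov Hm Hpm m2 Hlev x0).
- move=> I dI; exact: (DP_Ic Hcov Hm Hpm x0 dI).
Qed.
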